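(* Let $n\ge 1$ and let $J=\begin{pmatrix}0 & I_n\\ -I_n & 0\end{pmatrix}\in\mathbb{R}^{2n\times 2n}$. Let $L\in\mathbb{C}^{2n\times 2n}$ be a complex symmetric matrix ($L=L^T$) such that $J^{-1}L$ is diagonalizable. Then there exist invertible matrices $P,Q\in \mathrm{GL}(2n,\mathbb{C})$ and a diagonal matrix $\Lambda=\mathrm{diag}(\lambda_1,\dots,\lambda_n)\in\mathbb{C}^{n\times n}$ such that $$PLQ=\begin{pmatrix}0&\Lambda\\ \Lambda&0\end{pmatrix}\qquad\text{and}\qquad PJQ=J.$$ In particular, the eigenvalues of $J^{-1}L$ (counted with multiplicity) come in pairs $\pm\lambda_i$, $i=1,\dots,n$.
   Context: $I_n$ denotes the $n\times n$ identity matrix and $J$ is the standard symplectic form, which satisfies $J^T=J^{-1}=-J$. Transposition $^T$ is the ordinary (non-conjugating) transpose. *)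

(* Defs.v *)
From HB Require Import structures.
From mathcomp Require Import all_boot all_order all_algebra.
From mathcomp Require Export mxred.
From mathcomp Require Import reals.
From mathcomp.real_closed Require Export complex.
Set Implicit Arguments. Unset Strict Implicit. Unset Printing Implicit Defensive.
Import Order.TTheory GRing.Theory Num.Theory.
Local Open Scope ring_scope.

Definition symJ (F : pzRingType) (n : nat) : 'M[F]_(n + n) :=
  block_mx 0 1%:M (- 1%:M) 0.

(* Main.v *)
Require Import Defs.
From mathcomp Require Import all_boot all_order all_algebra all_fingroup.
From mathcomp Require Import reals.
From mathcomp.real_closed Require Import complex.
Import GRing.Theory Num.Theory.
Local Open Scope ring_scope.
Local Open Scope complex_scope.

Lemma pair_up (T : zmodType) (hT : forall x : T, x = - x -> x = 0) :
  forall m (s : seq T), size s = (m + m)%N -> perm_eq s (map -%R s) ->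
  exists d : seq T, size d = m /\ perm_eq s (d ++ map -%R d).
Proof.
elim=> [|m IH] s hs hp.
  by exists [::]; case: s hs hp.
have [/all_pred1P sE|] := boolP (all (pred1 0) s).
  exists (nseq m.+1 0); rewrite size_nseq; split=> //.
  by rewrite sE hs map_nseq oppr0 -nseqD perm_refl.
case/allPn => x xs /= x0.
have nxs : - x \in s.
  have := xs; rewrite (perm_mem hp) => /mapP [y ys ->]; by rewrite opprK.
have nxx : - x != x by apply/eqP => /esym /hT /eqP; rewrite (negbTE x0).
have p1 := perm_to_rem xs.
have nxs1 : - x \in rem x s by move: nxs; rewrite (perm_mem p1) inE (negbTE nxx).
have p2 := perm_to_rem nxs1.
set s2 := rem (- x) (rem x s) in p2.
have ps : perm_eq s [:: x, - x & s2] by rewrite (permPl p1) perm_cons.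
have hs2 : size s2 = (m + m)%N.
  by move: (perm_size ps); rewrite hs /= addnS addSn => -[].
have hp2 : perm_eq s2 (map -%R s2).
  have : perm_eq [:: x, - x & s2] [:: - x, x & map -%R s2].
    apply: perm_trans (perm_trans _ hp) _; first by rewrite perm_sym.
    by have := perm_map -%R ps; rewrite /= opprK.
  have -> : [:: - x, x & map -%R s2] = [:: - x] ++ [:: x] ++ map -%R s2 by [].
  by move=> h; rewrite perm_sym perm_catCA /= !perm_cons perm_sym in h.
have [d2 [hd2 pd2]] := IH s2 hs2 hp2.
exists (x :: d2); split; first by rewrite /= hd2.
rewrite (permPl ps) /= perm_cons.
have -> : d2 ++ - x :: map -%R d2 = d2 ++ [:: - x] ++ map -%R d2 by [].
by rewrite perm_sym perm_catCA /= perm_cons perm_sym.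
Qed.

Lemma cp_conj (F : fieldType) N (U V X : 'M[F]_N) :
  U *m V = 1%:M -> char_poly (V *m X *m U) = char_poly X.
Proof.
move=> UV; have VU := mulmx1C UV.
rewrite /char_poly /char_poly_mx.
have -> : 'X%:M - map_mx polyC (V *m X *m U) =
   map_mx polyC V *m ('X%:M - map_mx polyC X) *m map_mx polyC U.
  rewrite mulmxBr mulmxBl !map_mxM; congr (_ - _).
  by rewrite scalar_mxC -mulmxA -map_mxM VU map_mx1 mulmx1.
by rewrite !det_mulmx mulrAC -det_mulmx -map_mxM VU map_mx1 det1 mul1r.
Qed.

Lemma cp_tr (F : fieldType) N (X : 'M[F]_N) : char_poly X^T = char_poly X.
Proof.
rewrite /char_poly.
have -> : char_poly_mx X^T = (char_poly_mx X)^T.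
  by rewrite /char_poly_mx linearB /= tr_scalar_mx map_trmx.
by rewrite det_tr.
Qed.

Lemma cp_diag (F : fieldType) N (r : 'rV[F]_N) :
  char_poly (diag_mx r) = \prod_(i < N) ('X - (r 0 i)%:P).
Proof.
rewrite char_poly_trig ?diag_mx_is_trig //.
by apply: eq_bigr => i _; rewrite mxE eqxx mulr1n.
Qed.


Lemma JJ (F : fieldType) n : symJ F n *m symJ F n = - 1%:M.
Proof.
rewrite /symJ mulmx_block !mulmx0 !mul0mx !addr0 !add0r mulmx1 mul1mx.
by rewrite [X in _ = - X](scalar_mx_block n n) opp_block_mx !oppr0.
Qed.

Lemma JT (F : fieldType) n : (symJ F n)^T = - symJ F n.
Proof.
rewrite /symJ tr_block_mx !trmx0 tr_scalar_mx linearN /= tr_scalar_mx.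
by rewrite opp_block_mx !oppr0 opprK.
Qed.

Lemma conj_gen (F : comNzRingType) N (Si S P D : 'M[F]_N) : P^T *m P = 1%:M ->
  Si *m D *m S = (Si *m P^T) *m (P *m D *m P^T) *m (P *m S).
Proof.
move=> h; rewrite !mulmxA -[Si *m P^T *m P]mulmxA h mulmx1.
by rewrite -[Si *m D *m P^T *m P]mulmxA h mulmx1.
Qed.

Lemma uv_gen (F : comNzRingType) N (U V X Y : 'M[F]_N) : U *m V = 1%:M ->
  U *m (V *m X *m U) *m V *m Y = X *m Y.
Proof.
move=> h; rewrite !mulmxA h mul1mx -[X *m U *m V]mulmxA h mulmx1 //.
Qed.

Lemma uv_gen2 (F : comNzRingType) N (U V A B : 'M[F]_N) : U *m V = 1%:M ->
  A *m B = 1%:M -> U *m A *m B *m (V *m B) = B.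
Proof.
move=> h h2; rewrite -[U *m A *m B]mulmxA h2 mulmx1 mulmxA h mul1mx //.
Qed.

Theorem lemma1 (R : realType) (n : nat) (L : 'M[R[i]]_(n + n)) :
  (1 <= n)%N ->
  L^T = L ->
  diagonalizable (invmx (symJ R[i] n) *m L) ->
  exists P Q : 'M[R[i]]_(n + n), exists d : 'rV[R[i]]_n,
    [/\ P \in unitmx, Q \in unitmx,
        P *m L *m Q = block_mx 0 (diag_mx d) (diag_mx d) 0,
        P *m symJ R[i] n *m Q = symJ R[i] n &
        char_poly (invmx (symJ R[i] n) *m L) =
          \prod_(k < n) (('X - (d 0 k)%:P) * ('X + (d 0 k)%:P))].
Proof.
move=> n1 hL [S Sunit hS].
set J := symJ R[i] n.
have hJJ : J *m J = - 1%:M by apply: JJ.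
have hJJ' : J *m - J = 1%:M by rewrite mulmxN hJJ opprK.
have Junit : J \in unitmx by case: (mulmx1_unit hJJ').
have hJi : invmx J = - J.
  by rewrite -[invmx J]mulmx1 -hJJ' mulmxA mulVmx // mul1mx.
rewrite hJi in hS *.
set M := (- J) *m L in hS *.
case/(similar_diagLR Sunit): hS => e hM.
rewrite conjumx ?unitmx_inv // invmxK in hM.
set D := diag_mx e in hM.
have hMT : M^T = J *m M *m J.
  rewrite /M trmx_mul hL linearN /= JT opprK.
  by rewrite mulmxA hJJ' mul1mx.
pose es := [seq e 0 i | i <- enum 'I_(n + n)].
have hperm : perm_eq es (map -%R es).
  apply: prod_XsubC_eq.
  have h1 : char_poly M = char_poly D.
    by rewrite hM cp_conj // mulmxV.
  have h2 : char_poly M = char_poly (diag_mx (- e)).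
    rewrite -[char_poly M]cp_tr hMT hM.
    rewrite -[RHS](@cp_conj _ _ (- (S *m J)) (J *m invmx S)); last first.
      by rewrite mulNmx -!mulmxA (mulmxA J J) hJJ mulNmx mul1mx mulmxN opprK mulmxV.
    congr char_poly.
    rewrite /D linearN /= [diag_mx (- e)]linearN /= mulmxN mulNmx opprK.
    by rewrite !mulmxA.
  move: (etrans (esym h1) h2); rewrite /D !cp_diag /es !big_map => h.
  have h' : \prod_(i < n + n) ('X - (e 0 i)%:P) =
            \prod_(i < n + n) ('X - (- e 0 i)%:P).
    by rewrite h; apply: eq_bigr => i _; rewrite mxE.
  move: h'; rewrite /index_enum; unlock => h'; exact: h'.
have hT : forall x : R[i], x = - x -> x = 0.
  move=> x hx; apply/eqP; have : x *+ 2 == 0 by rewrite mulr2n {1}hx addNr.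
  by rewrite mulrn_eq0.
have hes : size es = (n + n)%N by rewrite size_map size_enum_ord.
have [d [sd pd]] := @pair_up _ hT _ _ hes hperm.
pose t := [tuple e 0 i | i < n + n].
have pt : perm_eq (d ++ map -%R d) t.
  by rewrite perm_sym /t /=.
case/tuple_permP: pt => s hs.
have hf : forall i : 'I_(n + n), nth 0 (d ++ map -%R d) i = e 0 (s i).
  by move=> i; rewrite hs nth_mktuple tnth_mktuple.
pose dv : 'rV[R[i]]_n := \row_k nth 0 d k.
pose f := row_mx dv (- dv).
have hf2 : forall i, f 0 i = e 0 (s i).
  move=> i; rewrite -hf; case: (split_ordP i) => k ->.
    by rewrite row_mxEl mxE nth_cat sd /= ltn_ord.
  rewrite row_mxEr !mxE nth_cat sd /= ltnNge leq_addr /= addKn (nth_map 0) //.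
  by rewrite sd.
pose Pm : 'M[R[i]]_(n + n) := perm_mx s.
have hPP : Pm *m Pm^T = 1%:M by rewrite tr_perm_mx -perm_mxM mulgV perm_mx1.
have hPP' : Pm^T *m Pm = 1%:M := mulmx1C hPP.
have hdiag : diag_mx f = Pm *m D *m Pm^T.
  rewrite tr_perm_mx -row_permE -col_permE; apply/matrixP => i j.
  by rewrite [LHS]mxE hf2 !mxE (inj_eq perm_inj).
pose U := Pm *m S. pose V := invmx S *m Pm^T.
have hUV : U *m V = 1%:M.
  by rewrite /U /V mulmxA -(mulmxA Pm) mulmxV // mulmx1 hPP.
have hM2 : M = V *m diag_mx f *m U.
  by rewrite hdiag hM /U /V; apply: conj_gen.
have nJunit : (- J) \in unitmx by case: (mulmx1_unit hJJ').
have Vunit : V \in unitmx by case: (mulmx1_unit hUV).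
have hnJJ : (- J) *m J = 1%:M by rewrite mulNmx hJJ opprK.
exists (U *m (- J)), (V *m J), dv; split.
- by rewrite !unitmx_mul unitmx_perm Sunit nJunit.
- by rewrite unitmx_mul Vunit Junit.
- have -> : U *m - J *m L *m (V *m J) = U *m M *m V *m J by rewrite /M !mulmxA.
  rewrite hM2 uv_gen //.
  rewrite /f diag_mx_row /J /symJ mulmx_block !mulmx0 !mul0mx !addr0 !add0r.
  by rewrite mulmx1 mulmxN mulmx1 linearN /= opprK.
- by apply: uv_gen2.
- rewrite hM2 cp_conj // cp_diag big_split_ord /= -big_split.
  apply: eq_bigr => k _; rewrite row_mxEl row_mxEr !mxE polyCN opprK //.

Qed.
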